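(* Let $C=p_r\dots p_s$ be a configuration of g-2PATH of Type II having free left hand, with $r<0$. Let $j_0$ be the smallest integer $j$ with $0\le j\le s$ such that $W(r,j)$ is finite. Then $C$ satisfies the condition of noninterference of extensions (CNI) if and only if $\mathrm{NI}(r+1,j_0)$ holds.
   Context: Positions are elements of $\mathbb{Z}^2$; with $\epsilon_0=(1,0),\epsilon_1=(0,1),\epsilon_2=(-1,0),\epsilon_3=(0,-1)$, positions $p,p'$ are adjacent if $p'-p$ is some $\epsilon_i$. A configuration of g-2PATH is a sequence $C=p_r\dots p_s$ ($r\le0\le s$) of positions with $p_0=(0,0)$, consecutive positions adjacent, all positions distinct, and $p_l,p_m$ not adjacent whenever $|l-m|\ge2$. For $p\in C$, $\mathrm{bc}_C(p)=(b_0,\dots,b_3)$ with $b_i=1$ iff $p+\epsilon_i\in C$. For $r\le i\le0\le j\le s$: $W(i,j)$ is the set of pairs $(x_0,x_1)$ of finite, possibly empty, sequences of positions such that $x_0p_i\dots p_jx_1$ is a configuration $C'$ of g-2PATH (general at $p_0$) with $\mathrm{bc}_{C'}(p_l)=\mathrm{bc}_C(p_l)$ for $i\le l\le j$; $U(i,j)$, $V(i,j)$ are the sets of first, resp. second, components of its elements; $f(i,j)=\sup\{|x_0|:x_0\in U(i,j)\}$, $g(i,j)=\sup\{|x_1|:x_1\in V(i,j)\}$ (possibly $\infty$). $\mathrm{NI}(i,j)$ means $W(i,j)=U(i,j)\times V(i,j)$. $I=\{(i,j): r\le i-1,\ W(i,j)$ infinite, $W(i-1,j)$ finite$\}$, $J=\{(i,j):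 j+1\le s,\ W(i,j)$ infinite, $W(i,j+1)$ finite$\}$, $K=\{(i,j): W(i,j)$ finite$\}$. $C$ satisfies CNI if $\mathrm{NI}(i,j)$ holds for all $(i,j)\in I\cup J\cup K$. The left hand of $C$ is free if $r=0$ or ($r<0$ and $f(r+1,s)=\infty$), closed otherwise; the right hand is free if $s=0$ or ($s>0$ and $g(r,s-1)=\infty$), closed otherwise. $C$ is of Type II if exactly one hand is free. *)

(* Defs.v *)
From Stdlib Require Import ZArith List Lia.
Import ListNotations.
Open Scope Z_scope.

Definition pos := (Z * Z)%type.

Definition pos_eq_dec : forall p q : pos, {p = q} + {p <> q}.
Proof. decide equality; apply Z.eq_dec. Defined.

Definition eps (i : nat) : pos :=
  match i with
  | O => (1, 0)
  | 1%nat => (0, 1)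
  | 2%nat => (-1, 0)
  | _ => (0, -1)
  end.

Definition padd (p q : pos) : pos := (fst p + fst q, snd p + snd q).

Definition adjacent (p p' : pos) : Prop :=
  exists i : nat, (i < 4)%nat /\ p' = padd p (eps i).

Definition is_path (L : list pos) : Prop :=
  (forall a : nat, (S a < length L)%nat ->
      adjacent (nth a L (0,0)) (nth (S a) L (0,0))) /\
  (forall a b : nat, (a < length L)%nat -> (b < length L)%nat -> a <> b ->
      nth a L (0,0) <> nth b L (0,0)) /\
  (forall a b : nat, (b < length L)%nat -> (a + 2 <= b)%nat ->
      ~ adjacent (nth a L (0,0)) (nth b L (0,0))).

(* A sequence p_r ... p_s is stored as its first index r and the list
   [p_r; ...; p_s]. *)
Record config := mkConfig { cr : Z; cl : list pos }.

Definition cs (C : config) : Z := cr C + Z.of_nat (length (cl C)) - 1.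

Definition pt (C : config) (l : Z) : pos := nth (Z.to_nat (l - cr C)) (cl C) (0,0).

Definition is_config (C : config) : Prop :=
  cr C <= 0 <= cs C /\ pt C 0 = (0,0) /\ is_path (cl C).

Definition bc (L : list pos) (p : pos) : list bool :=
  map (fun i => if in_dec pos_eq_dec (padd p (eps i)) L then true else false)
      [0%nat; 1%nat; 2%nat; 3%nat].

Definition seg (C : config) (i j : Z) : list pos :=
  firstn (Z.to_nat (j - i + 1)) (skipn (Z.to_nat (i - cr C)) (cl C)).

(* W(i,j): x0 p_i ... p_j x1 is a configuration (indexed so that p_0 keeps
   index 0; then p_0 = (0,0) and the index range condition hold
   automatically) with the same bond configurations at p_i..p_j. *)
Definition W (C : config) (i j : Z) (x : list pos * list pos) : Prop :=
  let L' := fst x ++ seg C i j ++ snd x in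
  is_path L' /\
  forall l : Z, i <= l <= j -> bc L' (pt C l) = bc (cl C) (pt C l).

Definition U (C : config) (i j : Z) (x0 : list pos) : Prop :=
  exists x1, W C i j (x0, x1).
Definition V (C : config) (i j : Z) (x1 : list pos) : Prop :=
  exists x0, W C i j (x0, x1).

Definition finite_set {A : Type} (P : A -> Prop) : Prop :=
  exists l : list A, forall x, P x -> In x l.

Definition sup_len_infinite (P : list pos -> Prop) : Prop :=
  forall n : nat, exists x, P x /\ (n <= length x)%nat.

Definition f_inf (C : config) (i j : Z) : Prop := sup_len_infinite (U C i j).
Definition g_inf (C : config) (i j : Z) : Prop := sup_len_infinite (V C i j).

Definition NI (C : config) (i j : Z) : Prop :=
  forall x0 x1, W C i j (x0, x1) <-> (U C i j x0 /\ V C i j x1).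

Definition W_fin (C : config) (i j : Z) : Prop := finite_set (W C i j).

Definition in_range (C : config) (i j : Z) : Prop :=
  cr C <= i <= 0 /\ 0 <= j <= cs C.

Definition inI (C : config) (i j : Z) : Prop :=
  in_range C i j /\ cr C <= i - 1 /\ ~ W_fin C i j /\ W_fin C (i - 1) j.
Definition inJ (C : config) (i j : Z) : Prop :=
  in_range C i j /\ j + 1 <= cs C /\ ~ W_fin C i j /\ W_fin C i (j + 1).
Definition inK (C : config) (i j : Z) : Prop :=
  in_range C i j /\ W_fin C i j.

Definition CNI (C : config) : Prop :=
  forall i j, inI C i j \/ inJ C i j \/ inK C i j -> NI C i j.

Definition left_free (C : config) : Prop :=
  cr C = 0 \/ (cr C < 0 /\ f_inf C (cr C + 1) (cs C)).
Definition right_free (C : config) : Prop :=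
  cs C = 0 \/ (cs C > 0 /\ g_inf C (cr C) (cs C - 1)).

Definition typeII (C : config) : Prop :=
  (left_free C /\ ~ right_free C) \/ (~ left_free C /\ right_free C).

(* Main.v *)
Require Import Defs.
From Stdlib Require Import ZArith List Lia.
Import ListNotations.
Open Scope Z_scope.

Lemma firstn_add_app {A} (n m : nat) (L : list A) :
  firstn (n + m) L = firstn n L ++ firstn m (skipn n L).
Proof.
  revert L; induction n as [|n IH]; intros L; simpl; auto.
  destruct L; simpl; auto. rewrite firstn_nil; auto. now rewrite IH.
Qed.

Lemma seg_split C i k j : cr C <= i <= k -> k <= j + 1 ->
  seg C i j = seg C i (k-1) ++ seg C k j.
Proof.
  intros H1 H2. unfold seg.
  replace (Z.to_nat (j - i + 1)) with (Z.to_nat (k - 1 - i + 1) + Z.to_nat (j - k + 1))%nat by lia.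
  rewrite firstn_add_app. f_equal. rewrite skipn_skipn. f_equal. f_equal. lia.
Qed.

Lemma seg_len C i j : cr C <= i -> i <= j + 1 -> j <= cs C ->
  length (seg C i j) = Z.to_nat (j - i + 1).
Proof.
  intros. unfold seg, cs in *. rewrite length_firstn, length_skipn. lia.
Qed.

Lemma seg_nth C i j n : (n < Z.to_nat (j - i + 1))%nat ->
  nth n (seg C i j) (0,0) = nth (Z.to_nat (i - cr C) + n) (cl C) (0,0).
Proof.
  intros H. unfold seg. rewrite nth_firstn. 
  destruct (Nat.ltb_spec n (Z.to_nat (j - i + 1))); [|lia].
  now rewrite nth_skipn.
Qed.

Lemma seg_pt C i j l : cr C <= i <= l -> l <= j ->
  nth (Z.to_nat (l - i)) (seg C i j) (0,0) = pt C l.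
Proof.
  intros. rewrite seg_nth by lia. unfold pt. f_equal. lia.
Qed.

Lemma eps_opp d : (d < 4)%nat -> exists e, (e < 4)%nat /\ padd (padd (0,0) (eps d)) (eps e) = (0,0).
Proof.
  intros. destruct d as [|[|[|[|]]]]; [exists 2%nat|exists 3%nat|exists 0%nat|exists 1%nat|lia];
  simpl; split; auto; lia.
Qed.

Lemma adjacent_sym p q : adjacent p q -> adjacent q p.
Proof.
  intros [d [Hd ->]]. destruct p as [a b].
  destruct d as [|[|[|[|]]]]; [exists 2%nat|exists 3%nat|exists 0%nat|exists 1%nat|lia];
  unfold padd; simpl; split; try lia; f_equal; lia.
Qed.

Lemma adjacent_neq p q : adjacent p q -> p <> q.
Proof.
  intros [d [Hd ->]]. destruct p as [a b].
  destruct d as [|[|[|[|]]]]; unfold padd; simpl; intro H; inversion H; lia.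
Qed.

Lemma nadj_left (A S B : list pos) n q :
  is_path (A ++ S ++ B) -> (1 <= n)%nat -> (n < length S)%nat ->
  adjacent (nth n S (0,0)) q -> ~ In q A.
Proof.
  intros [_ [_ HP]] Hn HS Hadj Hin.
  destruct (In_nth A q (0,0) Hin) as [k [Hk Hq]].
  apply (HP k (length A + n)%nat).
  - rewrite !length_app. lia.
  - lia.
  - rewrite app_nth1 by lia. rewrite Hq.
    rewrite app_nth2_plus, app_nth1 by lia. now apply adjacent_sym.
Qed.

Lemma bc_ext (L1 L2 : list pos) p :
  (forall d, (d < 4)%nat -> (In (padd p (eps d)) L1 <-> In (padd p (eps d)) L2)) ->
  bc L1 p = bc L2 p.
Proof.
  intros H. unfold bc.
  assert (E : forall d, (d < 4)%nat ->
    (if in_dec pos_eq_dec (padd p (eps d)) L1 then true else false) =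
    (if in_dec pos_eq_dec (padd p (eps d)) L2 then true else false)).
  { intros d Hd. specialize (H d Hd).
    destruct (in_dec pos_eq_dec (padd p (eps d)) L1), (in_dec pos_eq_dec (padd p (eps d)) L2);
      tauto. }
  apply map_ext_in. intros d Hd. apply E.
  destruct Hd as [<-|[<-|[<-|[<-|[]]]]]; lia.
Qed.

Lemma bc_nth (L1 L2 : list pos) p d : (d < 4)%nat -> bc L1 p = bc L2 p ->
  (In (padd p (eps d)) L1 -> In (padd p (eps d)) L2).
Proof.
  intros Hd H. unfold bc in H. simpl in H.
  destruct d as [|[|[|[|]]]]; try lia; injection H; clear H; intros;
  repeat match goal with
  | H : (if in_dec _ ?x ?l1 then _ else _) = (if in_dec _ ?x ?l2 then _ else _) |- _ =>
     destruct (in_dec pos_eq_dec x l1); destruct (in_dec pos_eq_dec x l2); try discriminate; clear H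
  end; simpl in *; tauto.
Qed.

Lemma shrink C i i' j' j x0 x1 : cr C <= i <= i' -> i' <= j' + 1 -> j' <= j ->
  W C i j (x0, x1) -> W C i' j' (x0 ++ seg C i (i'-1), seg C (j'+1) j ++ x1).
Proof.
  intros H1 H2 H3 [HP HB]. unfold W in *; simpl in *.
  assert (E : x0 ++ seg C i j ++ x1 =
     (x0 ++ seg C i (i'-1)) ++ seg C i' j' ++ seg C (j'+1) j ++ x1).
  { rewrite (seg_split C i i' j) by lia.
    rewrite (seg_split C i' (j'+1) j) by lia.
    replace (j' + 1 - 1) with j' by lia. rewrite !app_assoc. reflexivity. }
  rewrite <- E. split; auto. intros l Hl. apply HB. lia.
Qed.

Lemma not_fin C i j : f_inf C (cr C + 1) (cs C) -> cr C + 1 <= i -> i <= j <= cs C ->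
  ~ W_fin C i j.
Proof.
  intros Hf Hi Hj [l Hl].
  set (M := list_max (map (fun x => length (fst x)) l)).
  destruct (Hf (S M)) as [x0 [[y1 HW] Hlen]].
  pose proof (shrink C (cr C + 1) i j (cs C) x0 y1 ltac:(lia) ltac:(lia) ltac:(lia) HW) as HW'.
  apply Hl in HW'.
  assert (Hm : (length (fst (x0 ++ seg C (cr C + 1) (i - 1), seg C (j + 1) (cs C) ++ y1)) <= M)%nat).
  { unfold M. apply (in_map (fun x => length (fst x))) in HW'.
    assert (HF := proj1 (list_max_le (map (fun x : list pos * list pos => length (fst x)) l) _) (le_n _)).
    rewrite Forall_forall in HF. exact (HF _ HW'). }
  simpl in Hm. rewrite length_app in Hm. lia.
Qed.

Lemma ext_right C i j' j x0 x1 y0 : cr C <= i <= j' -> j' < j -> j <= cs C ->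
  W C i j' (x0, seg C (j'+1) j ++ x1) -> W C i j (y0, x1) -> W C i j (x0, x1).
Proof.
  intros H1 H2 H3 [HP HB] [HP2 HB2]. unfold W in *; simpl in *.
  assert (E : x0 ++ seg C i j ++ x1 = x0 ++ seg C i j' ++ seg C (j'+1) j ++ x1).
  { rewrite (seg_split C i (j'+1) j) by lia.
    replace (j' + 1 - 1) with j' by lia. rewrite !app_assoc. reflexivity. }
  rewrite E. split; auto. intros l Hl.
  destruct (Z_le_gt_dec l j') as [Hle|Hgt]. { apply HB; lia. }
  rewrite <- (HB2 l Hl). rewrite <- E in HP.
  apply bc_ext. intros d Hd.
  set (n := Z.to_nat (l - i)).
  assert (Hn : nth n (seg C i j) (0,0) = pt C l) by (apply seg_pt; lia).
  assert (Hlen : length (seg C i j) = Z.to_nat (j - i + 1)) by (apply seg_len; lia).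
  assert (Hadj : adjacent (nth n (seg C i j) (0,0)) (padd (pt C l) (eps d))).
  { rewrite Hn. exists d. auto. }
  pose proof (nadj_left x0 (seg C i j) x1 n _ HP ltac:(lia) ltac:(lia) Hadj) as N1.
  pose proof (nadj_left y0 (seg C i j) x1 n _ HP2 ltac:(lia) ltac:(lia) Hadj) as N2.
  rewrite <- E. rewrite !in_app_iff. tauto.
Qed.

Lemma left_end C j x0 x1 : is_config C -> cr C < 0 -> 0 <= j <= cs C ->
  W C (cr C) j (x0, x1) -> x0 = [].
Proof.
  intros [_ [_ HC]] Hr Hj [HP HB]. simpl in *.
  destruct x0 as [|a x0']; auto. exfalso.
  destruct (exists_last (l := a :: x0') ltac:(discriminate)) as [l' [q Hx]].
  rewrite Hx in HP, HB.
  assert (Hlen : length (seg C (cr C) j) = Z.to_nat (j - cr C + 1)) by (apply seg_len; lia).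
  assert (H0 : nth 0 (seg C (cr C) j) (0,0) = pt C (cr C)).
  { replace 0%nat with (Z.to_nat (cr C - cr C)) by lia. apply seg_pt; lia. }
  assert (H1 : nth 1 (seg C (cr C) j) (0,0) = nth 1 (cl C) (0,0)).
  { rewrite seg_nth by lia. f_equal. lia. }
  assert (Hpt : pt C (cr C) = nth 0 (cl C) (0,0)) by (unfold pt; f_equal; lia).
  set (L' := (l' ++ [q]) ++ seg C (cr C) j ++ x1) in *.
  assert (HL : length L' = (length l' + 1 + length (seg C (cr C) j) + length x1)%nat).
  { unfold L'. rewrite !length_app. simpl. lia. }
  assert (Nq : nth (length l') L' (0,0) = q).
  { unfold L'. rewrite app_nth1 by (rewrite length_app; simpl; lia).
    rewrite app_nth2 by lia. rewrite Nat.sub_diag. reflexivity. }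
  assert (Nq1 : nth (S (length l')) L' (0,0) = pt C (cr C)).
  { unfold L'. rewrite app_nth2 by (rewrite length_app; simpl; lia).
    rewrite length_app; cbn [length]. replace (S (length l') - (length l' + 1))%nat with 0%nat by lia.
    rewrite app_nth1 by lia. exact H0. }
  assert (Nq2 : nth (S (S (length l'))) L' (0,0) = nth 1 (cl C) (0,0)).
  { unfold L'. rewrite app_nth2 by (rewrite length_app; simpl; lia).
    rewrite length_app; cbn [length]. replace (S (S (length l')) - (length l' + 1))%nat with 1%nat by lia.
    rewrite app_nth1 by lia. exact H1. }
  destruct HP as [HA [HD HN]].
  assert (Ha : adjacent q (pt C (cr C))).
  { rewrite <- Nq, <- Nq1. apply HA. lia. }
  apply adjacent_sym in Ha. destruct Ha as [d [Hd Hqd]].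
  assert (Hin : In q (cl C)).
  { rewrite Hqd. apply (bc_nth L' (cl C)); auto. apply HB. lia.
    rewrite <- Hqd. unfold L'. rewrite !in_app_iff. simpl. tauto. }
  destruct (In_nth _ _ (0,0) Hin) as [m [Hm Hmq]].
  destruct HC as [_ [_ HCN]].
  assert (Hadj : adjacent (pt C (cr C)) q) by (exists d; auto).
  destruct m as [|[|m]].
  - apply (adjacent_neq _ _ Hadj). rewrite Hpt. auto.
  - apply (HD (length l') (S (S (length l')))); try lia.
    rewrite Nq, Nq2. auto.
  - apply (HCN 0%nat (S (S m))); [exact Hm|lia|]. rewrite <- Hpt. replace (nth (S (S m)) (cl C) (0,0)) with q by (symmetry; exact Hmq). auto.
Qed.

Lemma seg_empty C i : seg C i (i - 1) = [].
Proof. unfold seg. replace (Z.to_nat (i - 1 - i + 1)) with 0%nat by lia. reflexivity. Qed.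

Lemma NI_left C j : is_config C -> cr C < 0 -> 0 <= j <= cs C -> NI C (cr C) j.
Proof.
  intros HC Hr Hj x0 x1. split.
  - intros H. split; [exists x1|exists x0]; auto.
  - intros [[y1 H1] [y0 H2]].
    pose proof (left_end C j _ _ HC Hr Hj H1).
    pose proof (left_end C j _ _ HC Hr Hj H2). subst. auto.
Qed.

Lemma NI_ext C i j' j : NI C i j' -> cr C <= i <= j' -> j' <= j -> j <= cs C -> NI C i j.
Proof.
  intros HNI H1 H2 H3 x0 x1. split.
  - intros H. split; [exists x1|exists x0]; auto.
  - intros [[y1 HW1] [y0 HW2]].
    destruct (Z.eq_dec j' j) as [<-|Hne].
    { apply HNI. split; [exists y1|exists y0]; auto. }
    apply (ext_right C i j' j x0 x1 y0); try lia; auto.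
    apply HNI. split.
    + exists (seg C (j'+1) j ++ y1).
      pose proof (shrink C i i j' j x0 y1 ltac:(lia) ltac:(lia) ltac:(lia) HW1) as S.
      rewrite seg_empty, app_nil_r in S. exact S.
    + exists y0.
      pose proof (shrink C i i j' j y0 x1 ltac:(lia) ltac:(lia) ltac:(lia) HW2) as S.
      rewrite seg_empty, app_nil_r in S. exact S.
Qed.

Theorem theorem11 (C : config) :
  is_config C -> typeII C -> left_free C -> cr C < 0 ->
  forall j0 : Z,
    0 <= j0 <= cs C ->
    W_fin C (cr C) j0 ->
    (forall j : Z, 0 <= j < j0 -> ~ W_fin C (cr C) j) ->
    (CNI C <-> NI C (cr C + 1) j0).
Proof.
  intros HC _ HL Hr j0 Hj0 Hfin Hmin.
  assert (Hf : f_inf C (cr C + 1) (cs C)) by (destruct HL as [H|[_ H]]; [lia|exact H]).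
  split.
  - intros HCNI. apply HCNI. left. unfold inI, in_range.
    split; [lia|]. split; [lia|]. split.
    + apply not_fin; auto; lia.
    + replace (cr C + 1 - 1) with (cr C) by lia. exact Hfin.
  - intros HNI i j [HI|[HJ|HK]].
    + destruct HI as [[Hi Hj] [Hi1 [Hnf Hf1]]].
      destruct (Z.eq_dec (i - 1) (cr C)) as [E|E].
      * replace i with (cr C + 1) by lia.
        destruct (Z_lt_le_dec j j0) as [Hlt|Hge].
        { exfalso. apply (Hmin j); [lia|]. rewrite <- E. exact Hf1. }
        apply (NI_ext C (cr C + 1) j0 j); auto; lia.
      * exfalso. apply (not_fin C (i-1) j Hf); auto; lia.
    + destruct HJ as [[Hi Hj] [Hj1 [Hnf Hf1]]].
      destruct (Z.eq_dec i (cr C)) as [->|E].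
      * apply NI_left; auto; lia.
      * exfalso. apply (not_fin C i (j+1) Hf); auto; lia.
    + destruct HK as [[Hi Hj] Hf1].
      destruct (Z.eq_dec i (cr C)) as [->|E].
      * apply NI_left; auto; lia.
      * exfalso. apply (not_fin C i j Hf); auto; lia.
Qed.
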